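(* If $f$ satisfies the rate conditions of order $0$ and $z_1,z_2\in D$ satisfy $z_1\in J_s(z_2,1/L)$ and $f(z_1)\in J_s(f(z_2),1/L)$, then $\|\pi_y(f(z_1)-f(z_2))\|\le\mu_{s,1}\|\pi_y(z_1-z_2)\|$.
   Context: $c,u,s$ positive integers, $\Lambda=(\mathbb{R}/\mathbb{Z})^c$, $R_\Lambda=\tfrac12$; points are ''in the same chart'' if their $\lambda$-components have lifts to $\mathbb{R}^c$ at distance $\le R_\Lambda$; differences, norms, cones and derivatives are computed in such lifts. $\overline B_n(R)$ closed ball at $0$; Euclidean norms. $0<R<R_\Lambda/2$, $D=\Lambda\times\overline B_u(R)\times\overline B_s(R)$, $z=(\lambda,x,y)$, projections $\pi_\lambda,\pi_x,\pi_y,\pi_{(\lambda,x)}$; $f:D\to\Lambda\times\mathbb{R}^u\times\mathbb{R}^s$ is $C^1$, $f=(f_\lambda,f_x,f_y)$. $m(A)=\max\{c:\|Av\|\ge c\|v\|\}$, $m(\mathbf A)=\inf_{A\in\mathbf A}m(A)$; $[\partial g/\partial w(U)]$ = set of matrices with $(i,j)$ entry in $[\inf_U\partial g_i/\partial w_j,\sup_U\partial g_i/\partial w_j]$; $P(z)=\{w\in D:\|\pi_\lambda w-\pi_\lambda z\|\le R_\Lambda/2\}$. Fix $L\in(2R/R_\Lambda,1)$. $\mu_{s,1}=\sup_D\{\|\partial_yf_y\|+\frac1L\|\partial_{(\lambda,x)}f_y\|\}$, $\xi_{u,1,P}=\inf_{z\in D}m[\partial_xf_x(P(z))]-\frac1L\sup_D\|\partial_{(\lambda,y)}f_x\|$,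 $\mu_{cs,1}=\sup_D\{\|\partial_{(\lambda,y)}f_{(\lambda,y)}\|+L\|\partial_xf_{(\lambda,y)}\|\}$, $\xi_{cu,1,P}=\inf_{z\in D}m[\partial_{(\lambda,x)}f_{(\lambda,x)}(P(z))]-L\sup_D\|\partial_yf_{(\lambda,x)}\|$. Rate conditions of order $0$: $\mu_{s,1}<1<\xi_{u,1,P}$, $\mu_{cs,1}<\xi_{u,1,P}$, $\mu_{s,1}<\xi_{cu,1,P}$. $J_s(z,M)=\{(\lambda,x,y):\|(\lambda,x)-\pi_{(\lambda,x)}z\|\le M\|y-\pi_yz\|\}$. *)

(* Defs.v *)
From HB Require Import structures.
From mathcomp Require Import all_boot all_order all_algebra.
From mathcomp Require Import all_classical all_reals all_analysis.
Set Implicit Arguments. Unset Strict Implicit. Unset Printing Implicit Defensive.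
Import Order.TTheory GRing.Theory Num.Theory.
Import numFieldNormedType.Exports.
Local Open Scope classical_set_scope.
Local Open Scope ring_scope.

(* Lifted phase space R^c x R^u x R^s ; a point z = ((lambda, x), y). *)
Definition pt (R : realType) (c u s : nat) : Type :=
  ('rV[R]_c * 'rV[R]_u * 'rV[R]_s)%type.

Section Defs.
Context {R : realType} {c u s : nat}.

Definition enorm {m n : nat} (A : 'M[R]_(m, n)) : R :=
  Num.sqrt (\sum_(i < m) \sum_(j < n) A i j ^+ 2).

Definition opnorm {m n : nat} (A : 'M[R]_(m, n)) : R :=
  sup [set enorm (A *m v) | v in [set v : 'cV[R]_n | enorm v <= 1]].

Definition mlow {m n : nat} (A : 'M[R]_(m, n)) : R :=
  sup [set k : R | forall v : 'cV[R]_n, k * enorm v <= enorm (A *m v)].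

Definition mlowset {m n : nat} (AA : set 'M[R]_(m, n)) : R :=
  inf [set mlow A | A in AA].

Definition imat {m n : nat} (G : pt R c u s -> 'M[R]_(m, n)) (U : set (pt R c u s))
  : set 'M[R]_(m, n) :=
  [set A | forall i j, inf [set G w i j | w in U] <= A i j /\
                       A i j <= sup [set G w i j | w in U]].

Definition intvec {n : nat} (k : 'rV[int]_n) : 'rV[R]_n := map_mx (fun a => a%:~R) k.

Definition inD (Rr : R) (z : pt R c u s) : Prop :=
  enorm z.1.2 <= Rr /\ enorm z.2 <= Rr.

Definition Dset (Rr : R) : set (pt R c u s) := [set z | inD Rr z].

(* P(z) = { w in D : ||pi_lambda w - pi_lambda z|| <= R_Lambda/2 } (torus distance) *)
Definition Pset (Rr : R) (z : pt R c u s) : set (pt R c u s) :=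
  [set w | inD Rr w /\
     exists k : 'rV[int]_c, enorm (w.1.1 + intvec k - z.1.1) <= 1 / 4].

(* w in J_s(z, M): in the same chart (lifts at distance <= R_Lambda = 1/2),
   with ||(lambda,x) - pi_(lambda,x) z|| <= M ||y - pi_y z|| computed in those lifts *)
Definition Js (z : pt R c u s) (M : R) (w : pt R c u s) : Prop :=
  exists k : 'rV[int]_c,
    enorm (w.1.1 + intvec k - z.1.1) <= 1 / 2 /\
    enorm (row_mx (w.1.1 + intvec k - z.1.1) (w.1.2 - z.1.2)) <= M * enorm (w.2 - z.2).

Definition el (j : 'I_c) : pt R c u s := ((delta_mx 0 j, 0), 0).
Definition ex (j : 'I_u) : pt R c u s := ((0, delta_mx 0 j), 0).
Definition ey (j : 'I_s) : pt R c u s := ((0, 0), delta_mx 0 j).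

Definition is_C1 (F : pt R c u s -> pt R c u s) : Prop :=
  (forall z, differentiable F z) /\
  (forall v : pt R c u s, continuous (fun z => 'D_v F z)).

Definition is_lift (F : pt R c u s -> pt R c u s) : Prop :=
  forall (k : 'rV[int]_c) (z : pt R c u s),
    let z' := ((z.1.1 + intvec k, z.1.2), z.2) in
    (exists k' : 'rV[int]_c, (F z').1.1 = (F z).1.1 + intvec k') /\
    (F z').1.2 = (F z).1.2 /\ (F z').2 = (F z).2.

Section Jacobian.
Variable F : pt R c u s -> pt R c u s.
Let Fl z := (F z).1.1.
Let Fx z := (F z).1.2.
Let Fy z := (F z).2.

Definition dl_fl z : 'M[R]_(c, c) := \matrix_(i, j) ('D_(el j) Fl z) 0 i.
Definition dx_fl z : 'M[R]_(c, u) := \matrix_(i, j) ('D_(ex j) Fl z) 0 i.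
Definition dy_fl z : 'M[R]_(c, s) := \matrix_(i, j) ('D_(ey j) Fl z) 0 i.
Definition dl_fx z : 'M[R]_(u, c) := \matrix_(i, j) ('D_(el j) Fx z) 0 i.
Definition dx_fx z : 'M[R]_(u, u) := \matrix_(i, j) ('D_(ex j) Fx z) 0 i.
Definition dy_fx z : 'M[R]_(u, s) := \matrix_(i, j) ('D_(ey j) Fx z) 0 i.
Definition dl_fy z : 'M[R]_(s, c) := \matrix_(i, j) ('D_(el j) Fy z) 0 i.
Definition dx_fy z : 'M[R]_(s, u) := \matrix_(i, j) ('D_(ex j) Fy z) 0 i.
Definition dy_fy z : 'M[R]_(s, s) := \matrix_(i, j) ('D_(ey j) Fy z) 0 i.

Definition dlx_fy z : 'M[R]_(s, c + u) := row_mx (dl_fy z) (dx_fy z).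
Definition dly_fx z : 'M[R]_(u, c + s) := row_mx (dl_fx z) (dy_fx z).
Definition dly_fly z : 'M[R]_(c + s, c + s) :=
  block_mx (dl_fl z) (dy_fl z) (dl_fy z) (dy_fy z).
Definition dx_fly z : 'M[R]_(c + s, u) := col_mx (dx_fl z) (dx_fy z).
Definition dlx_flx z : 'M[R]_(c + u, c + u) :=
  block_mx (dl_fl z) (dx_fl z) (dl_fx z) (dx_fx z).
Definition dy_flx z : 'M[R]_(c + u, s) := col_mx (dy_fl z) (dy_fx z).

Variables (Rr L : R).

Definition mu_s1 : R :=
  sup [set opnorm (dy_fy z) + L^-1 * opnorm (dlx_fy z) | z in Dset Rr].
Definition xi_u1P : R :=
  inf [set mlowset (imat dx_fx (Pset Rr z)) | z in Dset Rr]
  - L^-1 * sup [set opnorm (dly_fx z) | z in Dset Rr].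
Definition mu_cs1 : R :=
  sup [set opnorm (dly_fly z) + L * opnorm (dx_fly z) | z in Dset Rr].
Definition xi_cu1P : R :=
  inf [set mlowset (imat dlx_flx (Pset Rr z)) | z in Dset Rr]
  - L * sup [set opnorm (dy_flx z) | z in Dset Rr].

Definition rate_conditions_0 : Prop :=
  mu_s1 < 1 /\ 1 < xi_u1P /\ mu_cs1 < xi_u1P /\ mu_s1 < xi_cu1P.
End Jacobian.
End Defs.

(* Main.v *)
Require Import Defs.
From HB Require Import structures.
From mathcomp Require Import all_boot all_order all_algebra.
From mathcomp Require Import all_classical all_reals all_analysis.
From mathcomp Require Import ring lra.
Set Implicit Arguments. Unset Strict Implicit. Unset Printing Implicit Defensive.
Import Order.TTheory GRing.Theory Num.Theory.
Import numFieldNormedType.Exports.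
Local Open Scope classical_set_scope.
Local Open Scope ring_scope.

Section CS.
Context {R : realType}.

Lemma sum_sq_ge0 (I : finType) (f : I -> R) : 0 <= \sum_i f i ^+ 2.
Proof. by apply: sumr_ge0 => i _; exact: sqr_ge0. Qed.

Lemma sum_sq_eq0 (I : finType) (f : I -> R) : \sum_i f i ^+ 2 = 0 -> forall i, f i = 0.
Proof.
move=> H i; have := (psumr_eq0P (P := xpredT) (F := fun i => f i ^+ 2)).
move=> /(_ (fun i _ => sqr_ge0 _) H i isT) /eqP; by rewrite sqrf_eq0 => /eqP.
Qed.

Lemma cs_sum (I : finType) (f g : I -> R) :
  \sum_i f i * g i <= Num.sqrt (\sum_i f i ^+ 2) * Num.sqrt (\sum_i g i ^+ 2).
Proof.
set A := Num.sqrt _; set B := Num.sqrt _.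
have A0 : 0 <= A by apply: sqrtr_ge0.
have B0 : 0 <= B by apply: sqrtr_ge0.
have AA : A ^+ 2 = \sum_i f i ^+ 2 by rewrite sqr_sqrtr // sum_sq_ge0.
have BB : B ^+ 2 = \sum_i g i ^+ 2 by rewrite sqr_sqrtr // sum_sq_ge0.
have [A00|Ap] := eqVneq A 0.
  have fz : forall i, f i = 0.
    by apply: sum_sq_eq0; rewrite -AA A00 expr0n.
  by rewrite big1 ?mulr_ge0 // => i _; rewrite fz mul0r.
have [B00|Bp] := eqVneq B 0.
  have gz : forall i, g i = 0.
    by apply: sum_sq_eq0; rewrite -BB B00 expr0n.
  by rewrite big1 ?mulr_ge0 // => i _; rewrite gz mulr0.
have ABp : 0 < A * B by rewrite mulr_gt0 // lt_def ?Ap ?Bp.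
have H : 0 <= \sum_i (B * f i - A * g i) ^+ 2 by exact: sum_sq_ge0.
have E : \sum_i (B * f i - A * g i) ^+ 2 =
   B ^+ 2 * \sum_i f i ^+ 2 - 2 * (A * B) * \sum_i f i * g i + A ^+ 2 * \sum_i g i ^+ 2.
  rewrite !mulr_sumr -sumrB -big_split /=; apply: eq_bigr => i _; ring.
rewrite E -AA -BB in H.
have : (A * B) * (\sum_i f i * g i) <= (A * B) * (A * B) by nra.
by rewrite ler_pM2l.
Qed.

Lemma cs_abs (I : finType) (f g : I -> R) :
  `|\sum_i f i * g i| <= Num.sqrt (\sum_i f i ^+ 2) * Num.sqrt (\sum_i g i ^+ 2).
Proof.
rewrite ler_norml cs_sum andbT lerNl.
have := cs_sum (fun i => - f i) g.
have -> : \sum_i - f i * g i = - \sum_i f i * g i.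
  by rewrite -sumrN; apply: eq_bigr => i _; rewrite mulNr.
have -> : \sum_i (- f i) ^+ 2 = \sum_i f i ^+ 2.
  by apply: eq_bigr => i _; rewrite sqrrN.
by [].
Qed.
End CS.

Section Enorm.
Context {R : realType}.

Lemma sqrt_le_sq (x y : R) : 0 <= y -> x <= y ^+ 2 -> Num.sqrt x <= y.
Proof.
move=> y0 xy; apply: le_trans (_ : Num.sqrt (y ^+ 2) <= y).
  by rewrite ler_sqrt // sqr_ge0.
by rewrite sqrtr_sqr ger0_norm.
Qed.

Lemma enormP {m n} (A : 'M[R]_(m, n)) :
  enorm A = Num.sqrt (\sum_(p : 'I_m * 'I_n) A p.1 p.2 ^+ 2).
Proof. by rewrite /enorm pair_bigA. Qed.

Lemma enorm_ge0 {m n} (A : 'M[R]_(m, n)) : 0 <= enorm A.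
Proof. exact: sqrtr_ge0. Qed.

Lemma enorm_sqr {m n} (A : 'M[R]_(m, n)) :
  enorm A ^+ 2 = \sum_(p : 'I_m * 'I_n) A p.1 p.2 ^+ 2.
Proof. by rewrite enormP sqr_sqrtr // sum_sq_ge0. Qed.

Lemma dot_le {m n} (A B : 'M[R]_(m, n)) :
  \sum_(p : 'I_m * 'I_n) A p.1 p.2 * B p.1 p.2 <= enorm A * enorm B.
Proof. by rewrite !enormP; apply: cs_sum. Qed.

Lemma enormD {m n} (A B : 'M[R]_(m, n)) : enorm (A + B) <= enorm A + enorm B.
Proof.
rewrite {1}enormP; apply: sqrt_le_sq; first by rewrite addr_ge0 ?enorm_ge0.
have H := dot_le A B.
have E : \sum_(p : 'I_m * 'I_n) (A + B) p.1 p.2 ^+ 2 =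
  \sum_(p : 'I_m * 'I_n) A p.1 p.2 ^+ 2 + 2 * \sum_(p : 'I_m * 'I_n) A p.1 p.2 * B p.1 p.2
  + \sum_(p : 'I_m * 'I_n) B p.1 p.2 ^+ 2.
  rewrite mulr_sumr -!big_split /=; apply: eq_bigr => p _; rewrite mxE; ring.
rewrite E -!enorm_sqr; nra.
Qed.

Lemma enormZ {m n} (a : R) (A : 'M[R]_(m, n)) : enorm (a *: A) = `|a| * enorm A.
Proof.
rewrite !enormP -sqrtr_sqr -sqrtrM ?sqr_ge0 // mulr_sumr; congr Num.sqrt.
by apply: eq_bigr => p _; rewrite mxE exprMn.
Qed.

Lemma enormN {m n} (A : 'M[R]_(m, n)) : enorm (- A) = enorm A.
Proof. by rewrite -scaleN1r enormZ normrN normr1 mul1r. Qed.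

Lemma enorm0 {m n} : enorm (0 : 'M[R]_(m, n)) = 0.
Proof. by rewrite -(scale0r (0 : 'M[R]_(m,n))) enormZ normr0 mul0r. Qed.

Lemma enorm_eq0 {m n} (A : 'M[R]_(m, n)) : enorm A = 0 -> A = 0.
Proof.
move=> H; have : enorm A ^+ 2 = 0 by rewrite H expr0n.
rewrite enorm_sqr => /sum_sq_eq0 Hp; apply/matrixP => i j.
by rewrite mxE (Hp (i, j)).
Qed.

Lemma entry_le {m n} (A : 'M[R]_(m, n)) i j : `|A i j| <= enorm A.
Proof.
rewrite enormP -sqrtr_sqr ler_sqrt ?sum_sq_ge0 //.
rewrite (bigD1 (i, j)) //= lerDl; apply: sumr_ge0 => p _; exact: sqr_ge0.
Qed.

Lemma enorm_le_entries {m n} (A : 'M[R]_(m, n)) (C : R) :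
  (forall i j, `|A i j| <= C) -> enorm A <= Num.sqrt ((m * n)%N%:R * C ^+ 2).
Proof.
move=> H; rewrite enormP ler_sqrt; last first.
  by rewrite mulr_ge0 ?sqr_ge0.
apply: le_trans (_ : \sum_(p : 'I_m * 'I_n) C ^+ 2 <= _).
  apply: ler_sum => p _; rewrite -real_normK ?num_real //.
  have c0 : 0 <= C := le_trans (normr_ge0 _) (H p.1 p.2).
  by rewrite ler_sqr ?nnegrE ?normr_ge0 //; exact: H.
by rewrite sumr_const card_prod !card_ord mulr_natl.
Qed.

Lemma enorm_tr {m n} (A : 'M[R]_(m, n)) : enorm A^T = enorm A.
Proof.
rewrite /enorm exchange_big; congr Num.sqrt; apply: eq_bigr => i _.
by apply: eq_bigr => j _; rewrite mxE.
Qed.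

Lemma enorm_mul {m n p} (A : 'M[R]_(m, n)) (v : 'M[R]_(n, p)) :
  enorm (A *m v) <= enorm A * enorm v.
Proof.
rewrite {1}/enorm; apply: sqrt_le_sq; first by rewrite mulr_ge0 ?enorm_ge0.
rewrite exprMn /enorm !sqr_sqrtr ?sumr_ge0 // => [|i _|i _]; last 2 first.
- by apply: sumr_ge0 => j _; exact: sqr_ge0.
- by apply: sumr_ge0 => j _; exact: sqr_ge0.
rewrite [X in _ <= _ * X]exchange_big /= mulr_suml; apply: ler_sum => i _.
rewrite mulr_sumr; apply: ler_sum => k _; rewrite mxE.
have := cs_abs (fun j => A i j) (fun j => v j k).
rewrite -sqrtrM ?sum_sq_ge0 // => H.
rewrite -real_normK ?num_real //.
apply: le_trans (_ : (Num.sqrt ((\sum_j A i j ^+ 2) * \sum_j v j k ^+ 2)) ^+ 2 <= _).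
  by rewrite ler_sqr ?nnegrE ?normr_ge0 ?sqrtr_ge0.
by rewrite sqr_sqrtr // mulr_ge0 ?sum_sq_ge0.
Qed.

End Enorm.

Section Opnorm.
Context {R : realType}.

Lemma opnorm_has_sup {m n} (A : 'M[R]_(m, n)) :
  has_sup [set enorm (A *m v) | v in [set v : 'cV[R]_n | enorm v <= 1]].
Proof.
split.
  by exists (enorm (A *m (0 : 'cV[R]_n))), 0 => //=; rewrite enorm0 ler01.
exists (enorm A) => _ [v /= v1 <-].
apply: le_trans (enorm_mul A v) _.
by rewrite -[leRHS]mulr1 ler_wpM2l ?enorm_ge0.
Qed.

Lemma opnorm_le {m n} (A : 'M[R]_(m, n)) : opnorm A <= enorm A.
Proof.
apply: ge_sup; first by case: (opnorm_has_sup A).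
move=> _ [v /= v1 <-]; apply: le_trans (enorm_mul A v) _.
by rewrite -[leRHS]mulr1 ler_wpM2l ?enorm_ge0.
Qed.

Lemma opnorm_ge {m n} (A : 'M[R]_(m, n)) (v : 'cV[R]_n) :
  enorm (A *m v) <= opnorm A * enorm v.
Proof.
have [v0|vn0] := eqVneq (enorm v) 0.
  by rewrite v0 (enorm_eq0 v0) mulmx0 enorm0 mulr0.
have vp : 0 < enorm v by rewrite lt_def vn0 enorm_ge0.
have H : enorm (A *m ((enorm v)^-1 *: v)) <= opnorm A.
  apply: sup_upper_bound; first exact: opnorm_has_sup.
  exists ((enorm v)^-1 *: v) => //=.
  by rewrite enormZ ger0_norm ?invr_ge0 ?enorm_ge0 // mulVf.
move: H; rewrite -scalemxAr enormZ ger0_norm ?invr_ge0 ?enorm_ge0 //.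
by rewrite mulrC -ler_pdivlMr ?invr_gt0 // invrK.
Qed.

Lemma opnorm_ge0 {m n} (A : 'M[R]_(m, n)) : 0 <= opnorm A.
Proof.
apply: sup_upper_bound; first exact: opnorm_has_sup.
by exists (0 : 'cV[R]_n) => //=; rewrite ?enorm0 ?ler01 // mulmx0 enorm0.
Qed.
End Opnorm.

Section Analysis.
Context {R : realType} {c u s : nat}.
Implicit Types (F : pt R c u s -> pt R c u s) (z : pt R c u s).

Definition shiftz (k : 'rV[int]_c) z : pt R c u s := ((z.1.1 + intvec k, z.1.2), z.2).

Lemma Fy_shift F k z : is_lift F -> (F (shiftz k z)).2 = (F z).2.
Proof. by move=> /(_ k z) [_ []]. Qed.

Lemma DFy_shift F k z v : is_lift F ->
  'D_v (fun w => (F w).2) (shiftz k z) = 'D_v (fun w => (F w).2) z.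
Proof.
move=> hl; rewrite /derive.
suff -> : (fun h : R => h^-1 *: ((F (h *: v + shiftz k z)).2 - (F (shiftz k z)).2))
  = (fun h : R => h^-1 *: ((F (h *: v + z)).2 - (F z).2)) by [].
apply: funext => h.
have -> : h *: v + shiftz k z = shiftz k (h *: v + z).
  case: v z => [[a1 a2] a3] [[b1 b2] b3]; rewrite /shiftz /=.
  change (((h *: a1 + (b1 + intvec k), h *: a2 + b2), h *: a3 + b3) = ((h *: a1 + b1 + intvec k, h *: a2 + b2), h *: a3 + b3)).
  by rewrite addrA.
by rewrite !Fy_shift.
Qed.

Lemma derive_snd F z v : derivable F z v ->
  'D_v (fun w => (F w).2) z = ('D_v F z).2.
Proof.
move=> H; rewrite {1}/derive.
have -> : (fun h : R => h^-1 *: ((F (h *: v + z)).2 - (F z).2)) =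
   snd \o (fun h : R => h^-1 *: (F (h *: v + z) - F z)) by [].
apply: cvg_lim => //.
apply: cvg_comp; first exact: H.
exact: cvg_snd.
Qed.

Lemma cont_entry F v i : is_C1 F ->
  continuous (fun z => ('D_v (fun w => (F w).2) z) ord0 i).
Proof.
move=> [hd hc].
have -> : (fun z => ('D_v (fun w => (F w).2) z) ord0 i) =
   (fun M : 'rV[R]_s => M ord0 i) \o snd \o (fun z => 'D_v F z).
  by apply: funext => z /=; rewrite derive_snd //; exact: diff_derivable.
move=> z; apply: continuous_comp; first exact: hc.
apply: continuous_comp; first exact: cvg_snd.
exact: coord_continuous.
Qed.

Definition cube (n : nat) : set 'rV[R]_n :=
  [set v | forall i, `[(-1 : R), 1]%classic (v ord0 i)].

Arguments cube : clear implicits.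

Lemma cube_compact n : compact (cube n).
Proof. by apply: (@rV_compact _ _ (fun=> `[(-1 : R), 1]%classic)) => _; exact: segment_compact. Qed.

Definition Kset : set (pt R c u s) := cube c `*` cube u `*` cube s.

Lemma Kset_compact : compact Kset.
Proof. by apply: compact_setX; [apply: compact_setX|]; exact: cube_compact. Qed.

Lemma cube0 n : cube n 0.
Proof. by move=> i; rewrite /= mxE in_itv /= lerN10 ler01. Qed.

Lemma bound_K (g : pt R c u s -> R) : continuous g ->
  exists M, forall z, Kset z -> `|g z| <= M.
Proof.
move=> gc.
have ne : Kset !=set0.
  by exists ((0, 0), 0); split; [split|]; exact: cube0.
have gc' : continuous (fun z => `|g z|).
  by move=> z; apply: continuous_comp; [exact: gc | exact: norm_continuous].
have [z0 _ H] := compact_EVT_max ne Kset_compact (continuous_subspaceT gc').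
by exists `|g z0| => z Kz; apply: H; rewrite inE.
Qed.

Lemma to_K Rr z : Rr < 1 -> inD Rr z ->
  exists k, Kset (shiftz k z).
Proof.
move=> R1 [hx hy].
exists (\row_i (- Num.floor (z.1.1 ord0 i))).
split; [split|] => i /=.
- rewrite !mxE in_itv /= intrN.
  have /andP[h1 h2] := floor_itv (z.1.1 ord0 i).
  rewrite intrD in h2; apply/andP; split; lra.
- have := entry_le z.1.2 ord0 i; rewrite in_itv /= => h.
  by rewrite -ler_norml; lra.
- have := entry_le z.2 ord0 i; rewrite in_itv /= => h.
  by rewrite -ler_norml; lra.
Qed.

Lemma bound_entry F Rr v : is_C1 F -> is_lift F -> Rr < 1 ->
  exists M, forall z, inD Rr z -> forall i,
     `|('D_v (fun w => (F w).2) z) ord0 i| <= M.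
Proof.
move=> hC hl R1.
have /choice [M HM] : forall i : 'I_s, exists M, forall z, Kset z ->
   `|('D_v (fun w => (F w).2) z) ord0 i| <= M.
  move=> i; exact: bound_K (@cont_entry F v i hC).
exists (\big[Num.max/0]_i M i) => z zD i.
have [k Kk] := to_K R1 zD.
rewrite -(DFy_shift k z v hl).
apply: le_trans (HM i _ Kk) _.
exact: le_bigmax.
Qed.

End Analysis.

Section MuBound.
Context {R : realType} {c u s : nat}.
Implicit Types (F : pt R c u s -> pt R c u s) (z : pt R c u s).

Lemma bound_family F Rr (I : finType) (vs : I -> pt R c u s) :
  is_C1 F -> is_lift F -> Rr < 1 ->
  exists M, forall z, inD Rr z -> forall j i,
     `|('D_(vs j) (fun w => (F w).2) z) ord0 i| <= M.
Proof.
move=> hC hl R1.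
have /choice [M HM] : forall j : I, exists M, forall z, inD Rr z -> forall i,
   `|('D_(vs j) (fun w => (F w).2) z) ord0 i| <= M.
  by move=> j; exact: bound_entry.
exists (\big[Num.max/0]_j M j) => z zD j i.
apply: le_trans (HM j z zD i) _.
exact: le_bigmax.
Qed.

Lemma mu_bound F Rr L z : is_C1 F -> is_lift F -> 0 <= Rr -> Rr < 1 -> 0 < L ->
  inD Rr z ->
  opnorm (dy_fy F z) + L^-1 * opnorm (dlx_fy F z) <= mu_s1 F Rr L.
Proof.
move=> hC hl R0 R1 L0 zD.
have [Ml Hl] := bound_family (@el R c u s) hC hl R1.
have [Mx Hx] := bound_family (@ex R c u s) hC hl R1.
have [My Hy] := bound_family (@ey R c u s) hC hl R1.
pose C := Num.max Ml (Num.max Mx My).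
have hy : forall w, inD Rr w -> forall i j, `|dy_fy F w i j| <= C.
  move=> w wD i j; rewrite mxE; apply: le_trans (Hy w wD j i) _.
  by rewrite /C !le_max lexx ?orbT.
have hlx : forall w, inD Rr w -> forall i j, `|dlx_fy F w i j| <= C.
  move=> w wD i j; rewrite /dlx_fy -[j]splitK; case: (fintype.split j) => k /=.
    rewrite row_mxEl mxE; apply: le_trans (Hl w wD k i) _.
    by rewrite /C !le_max lexx ?orbT.
  rewrite row_mxEr mxE; apply: le_trans (Hx w wD k i) _.
  by rewrite /C !le_max lexx ?orbT.
pose B := Num.sqrt ((s * s)%N%:R * C ^+ 2) + L^-1 * Num.sqrt ((s * (c + u))%N%:R * C ^+ 2).
have ub : forall w, inD Rr w ->
    opnorm (dy_fy F w) + L^-1 * opnorm (dlx_fy F w) <= B.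
  move=> w wD; apply: lerD.
    move: (enorm_le_entries (hy w wD)) => h; exact: (le_trans (opnorm_le _) h).
  apply: ler_wpM2l; first by rewrite invr_ge0 ltW.
  move: (enorm_le_entries (hlx w wD)) => h; exact: (le_trans (opnorm_le _) h).
apply: sup_upper_bound; last by exists z.
split; first by exists (opnorm (dy_fy F z) + L^-1 * opnorm (dlx_fy F z)), z.
by exists B => _ [w wD <-]; exact: ub.
Qed.

End MuBound.

Section MVTpart.
Context {R : realType} {c u s : nat}.
Implicit Types (F : pt R c u s -> pt R c u s) (z : pt R c u s).

Lemma derivable_snd F z v : derivable F z v ->
  derivable (fun w => (F w).2) z v.
Proof.
move=> H; apply/cvg_ex; exists ('D_v F z).2.
have -> : (fun h : R => h^-1 *: ((F (h *: v + z)).2 - (F z).2)) =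
   snd \o (fun h : R => h^-1 *: (F (h *: v + z) - F z)) by [].
apply: cvg_comp; first exact: H.
exact: cvg_snd.
Qed.

Lemma mvt_main F (z2 d : pt R c u s) :
  is_C1 F ->
  exists2 xi : R, 0 < xi < 1 &
    enorm ((F (d + z2)).2 - (F z2).2) <=
    enorm ('D_d (fun w => (F w).2) (xi *: d + z2)).
Proof.
move=> [hd hc].
pose Fy := fun w : pt R c u s => (F w).2.
pose G := fun t : R => Fy (t *: d + z2).
have qeq : forall t, (fun h : R => h^-1 *: (G (h *: 1 + t) - G t)) =
    (fun h : R => h^-1 *: (Fy (h *: d + (t *: d + z2)) - Fy (t *: d + z2))).
  move=> t; apply: funext => h; rewrite /G.
  have -> : (h *: 1 + t) *: d + z2 = h *: d + (t *: d + z2).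
    have -> : h *: (1 : R) = h by rewrite /GRing.scale /= mulr1.
    by rewrite scalerDl addrA.
  by [].
have dG : forall t, derivable Fy (t *: d + z2) d.
  by move=> t; apply: derivable_snd; exact: diff_derivable.
have hG : forall t : R, is_derive t (1 : R) G ('D_d Fy (t *: d + z2)).
  move=> t; apply: DeriveDef.
    by rewrite /derivable qeq; exact: dG.
  by rewrite /derive qeq.
pose W := G 1 - G 0.
pose phi := \sum_(j < s) (fun t : R => W ord0 j * G t ord0 j).
pose dphi := fun t => \sum_(j < s) W ord0 j * ('D_d Fy (t *: d + z2)) ord0 j.
have hphi : forall t : R, is_derive t (1 : R) phi (dphi t).
  move=> t; rewrite /phi /dphi; apply: is_derive_sum => j.
  have ej : is_derive t (1 : R) (fun t => G t ord0 j) (('D_d Fy (t *: d + z2)) ord0 j).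
    have [dGt vGt] := hG t.
    have /derivable_mxP dm := dGt.
    apply: DeriveDef; first exact: dm.
    have := derive_mx dGt; rewrite vGt.
    by move=> /(congr1 (fun M : 'rV[R]_s => M ord0 j)); rewrite mxE => ->.
  exact: (is_deriveZ (W ord0 j) ej).
have cphi : {within `[(0:R), 1], continuous phi}.
  apply: continuous_subspaceT => t.
  apply: differentiable_continuous; apply/derivable1_diffP.
  by case: (hphi t).
have [xi xi01 Hxi] := MVT ltr01 (fun x _ => hphi x) cphi.
exists xi; first by move: xi01; rewrite in_itv.
have eW : (F (d + z2)).2 - (F z2).2 = W.
  by rewrite /W /G /Fy scale1r scale0r add0r.
rewrite eW.
have Wsq : enorm W ^+ 2 = phi 1 - phi 0.
  rewrite /enorm sqr_sqrtr; last by apply: sumr_ge0 => i _; exact: sum_sq_ge0.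
  rewrite big_ord1 /phi !fct_sumE -sumrB; apply: eq_bigr => j _.
  have wj : W ord0 j = G 1 ord0 j - G 0 ord0 j.
    rewrite /W !mxE. reflexivity.
  by rewrite -mulrBr -wj expr2.
rewrite Hxi subr0 mulr1 /dphi in Wsq.
have := cs_sum (fun j => W ord0 j) (fun j => ('D_d Fy (xi *: d + z2)) ord0 j).
rewrite -Wsq.
have eW2 : forall (M : 'rV[R]_s), enorm M = Num.sqrt (\sum_j M ord0 j ^+ 2).
  by move=> M; rewrite /enorm big_ord1.
rewrite -!eW2 => h.
have h0 := enorm_ge0 W.
have h1 := enorm_ge0 ('D_d Fy (xi *: d + z2)).
rewrite /Fy in h1 h *; nra.
Qed.

End MVTpart.

Section Decomp.
Context {R : realType} {c u s : nat}.
Implicit Types (F : pt R c u s -> pt R c u s) (z : pt R c u s).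

Lemma add11 (x y : pt R c u s) : (x + y).1.1 = x.1.1 + y.1.1. Proof. reflexivity. Qed.
Lemma add12 (x y : pt R c u s) : (x + y).1.2 = x.1.2 + y.1.2. Proof. reflexivity. Qed.
Lemma add2 (x y : pt R c u s) : (x + y).2 = x.2 + y.2. Proof. reflexivity. Qed.
Lemma scale11 (a : R) (x : pt R c u s) : (a *: x).1.1 = a *: x.1.1. Proof. reflexivity. Qed.
Lemma scale12 (a : R) (x : pt R c u s) : (a *: x).1.2 = a *: x.1.2. Proof. reflexivity. Qed.
Lemma scale2 (a : R) (x : pt R c u s) : (a *: x).2 = a *: x.2. Proof. reflexivity. Qed.
Lemma sum11 n (f : 'I_n -> pt R c u s) : (\sum_j f j).1.1 = \sum_j (f j).1.1.
Proof.
elim: n f => [|n IH] f; first by rewrite !big_ord0.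
by rewrite !big_ord_recr add11 IH.
Qed.
Lemma sum12 n (f : 'I_n -> pt R c u s) : (\sum_j f j).1.2 = \sum_j (f j).1.2.
Proof.
elim: n f => [|n IH] f; first by rewrite !big_ord0.
by rewrite !big_ord_recr add12 IH.
Qed.
Lemma sum2 n (f : 'I_n -> pt R c u s) : (\sum_j f j).2 = \sum_j (f j).2.
Proof.
elim: n f => [|n IH] f; first by rewrite !big_ord0.
by rewrite !big_ord_recr add2 IH.
Qed.

Lemma pt_ext (x y : pt R c u s) :
  x.1.1 = y.1.1 -> x.1.2 = y.1.2 -> x.2 = y.2 -> x = y.
Proof. by case: x y => [[? ?] ?] [[? ?] ?] /= -> -> ->. Qed.

Lemma decomp_pt (d : pt R c u s) :
  d = \sum_j d.1.1 ord0 j *: el j + \sum_j d.1.2 ord0 j *: ex j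
      + \sum_j d.2 ord0 j *: ey j.
Proof.
set X := \sum_j d.1.1 ord0 j *: el j.
set Y := \sum_j d.1.2 ord0 j *: ex j.
set Z := \sum_j d.2 ord0 j *: ey j.
apply: pt_ext.
- transitivity (X.1.1 + Y.1.1 + Z.1.1); last reflexivity.
  rewrite /X /Y /Z !sum11.
  have e1 : \sum_j (d.1.1 ord0 j *: (el j : pt R c u s)).1.1 = \sum_j d.1.1 ord0 j *: delta_mx 0 j.
    by apply: eq_bigr => j _; reflexivity.
  have e2 : \sum_j (d.1.2 ord0 j *: (ex j : pt R c u s)).1.1 = 0.
    rewrite big1 // => j _; transitivity (d.1.2 ord0 j *: (0 : 'rV[R]_c)); first reflexivity.
    exact: scaler0.
  have e3 : \sum_j (d.2 ord0 j *: (ey j : pt R c u s)).1.1 = 0.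
    rewrite big1 // => j _; transitivity (d.2 ord0 j *: (0 : 'rV[R]_c)); first reflexivity.
    exact: scaler0.
  by rewrite e1 e2 e3 !addr0 -row_sum_delta.
- transitivity (X.1.2 + Y.1.2 + Z.1.2); last reflexivity.
  rewrite /X /Y /Z !sum12.
  have e1 : \sum_j (d.1.2 ord0 j *: (ex j : pt R c u s)).1.2 = \sum_j d.1.2 ord0 j *: delta_mx 0 j.
    by apply: eq_bigr => j _; reflexivity.
  have e2 : \sum_j (d.1.1 ord0 j *: (el j : pt R c u s)).1.2 = 0.
    rewrite big1 // => j _; transitivity (d.1.1 ord0 j *: (0 : 'rV[R]_u)); first reflexivity.
    exact: scaler0.
  have e3 : \sum_j (d.2 ord0 j *: (ey j : pt R c u s)).1.2 = 0.
    rewrite big1 // => j _; transitivity (d.2 ord0 j *: (0 : 'rV[R]_u)); first reflexivity.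
    exact: scaler0.
  by rewrite e1 e2 e3 add0r addr0 -row_sum_delta.
- transitivity (X.2 + Y.2 + Z.2); last reflexivity.
  rewrite /X /Y /Z !sum2.
  have e1 : \sum_j (d.2 ord0 j *: (ey j : pt R c u s)).2 = \sum_j d.2 ord0 j *: delta_mx 0 j.
    by apply: eq_bigr => j _; reflexivity.
  have e2 : \sum_j (d.1.1 ord0 j *: (el j : pt R c u s)).2 = 0.
    rewrite big1 // => j _; transitivity (d.1.1 ord0 j *: (0 : 'rV[R]_s)); first reflexivity.
    exact: scaler0.
  have e3 : \sum_j (d.1.2 ord0 j *: (ex j : pt R c u s)).2 = 0.
    rewrite big1 // => j _; transitivity (d.1.2 ord0 j *: (0 : 'rV[R]_s)); first reflexivity.
    exact: scaler0.
  by rewrite e1 e2 e3 !add0r -row_sum_delta.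
Qed.


Lemma D_decomp F q (d : pt R c u s) : differentiable F q ->
  'D_d (fun w => (F w).2) q =
   \sum_j d.1.1 ord0 j *: 'D_(el j) (fun w => (F w).2) q
 + \sum_j d.1.2 ord0 j *: 'D_(ex j) (fun w => (F w).2) q
 + \sum_j d.2 ord0 j *: 'D_(ey j) (fun w => (F w).2) q.
Proof.
move=> hd.
have hv : forall v, 'D_v (fun w => (F w).2) q = ('d F q v).2.
  by move=> v; rewrite derive_snd ?deriveE //; exact: diff_derivable.
have hs : forall n (a : 'I_n -> R) (vs : 'I_n -> pt R c u s),
    \sum_j a j *: 'D_(vs j) (fun w => (F w).2) q = ('d F q (\sum_j a j *: vs j)).2.
  move=> n a vs; rewrite linear_sum sum2; apply: eq_bigr => j _.
  rewrite linearZ hv; reflexivity.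
rewrite !hs hv {1}(decomp_pt d) !linearD; reflexivity.
Qed.

Lemma Dnorm F q (d : pt R c u s) : differentiable F q ->
  enorm ('D_d (fun w => (F w).2) q) <=
    opnorm (dy_fy F q) * enorm d.2 + opnorm (dlx_fy F q) * enorm (row_mx d.1.1 d.1.2).
Proof.
move=> hd.
have E : ('D_d (fun w => (F w).2) q)^T =
    dy_fy F q *m d.2^T + dlx_fy F q *m (row_mx d.1.1 d.1.2)^T.
  rewrite /dlx_fy tr_row_mx mul_row_col (D_decomp d hd).
  apply/matrixP => i k; rewrite (ord1 k) !mxE !summxE.
  rewrite [RHS]addrC; congr (_ + _ + _); apply: eq_bigr => j _;
    by rewrite !mxE mulrC.
rewrite -enorm_tr E.
apply: le_trans (enormD _ _) _.
apply: lerD.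
  by apply: le_trans (opnorm_ge _ _) _; rewrite enorm_tr.
by apply: le_trans (opnorm_ge _ _) _; rewrite enorm_tr.
Qed.

End Decomp.
Unset Implicit Arguments.

Theorem lemma4p6 (R : realType) (c u s : nat) (Rr L : R)
  (F : pt R c u s -> pt R c u s) (z1 z2 : pt R c u s) :
  (0 < c)%N -> (0 < u)%N -> (0 < s)%N ->
  0 < Rr -> Rr < 1 / 4 ->
  2 * Rr / (1 / 2) < L -> L < 1 ->
  is_C1 F -> is_lift F ->
  rate_conditions_0 F Rr L ->
  inD Rr z1 -> inD Rr z2 ->
  Js z2 L^-1 z1 -> Js (F z2) L^-1 (F z1) ->
  enorm ((F z1).2 - (F z2).2) <= mu_s1 F Rr L * enorm (z1.2 - z2.2).
Proof.
move=> _ _ _ R0 R4 RL L1 hC hl _ z1D z2D [k [_ hJ]] _.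
have L0 : 0 < L.
  apply: lt_trans RL; rewrite divr_gt0 // mulr_gt0 //.
have R1 : Rr < 1 by lra.
pose z1' := shiftz k z1.
pose d := z1' - z2.
have [xi /andP[xi0 xi1] Hm] := mvt_main z2 d hC.
have e1 : d + z2 = z1' by rewrite /d subrK.
rewrite e1 /z1' Fy_shift // in Hm.
pose q := xi *: d + z2.
have qD : inD Rr q.
  have cvx : forall n (a b : 'rV[R]_n), enorm a <= Rr -> enorm b <= Rr ->
      enorm (xi *: (a - b) + b) <= Rr.
    move=> n a b ha hb.
    have -> : xi *: (a - b) + b = xi *: a + (1 - xi) *: b.
      rewrite scalerBl scale1r scalerBr -addrA [X in _ + X = _]addrC; reflexivity.
    apply: le_trans (enormD _ _) _.
    have xi0' : 0 <= xi := ltW xi0.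
    have xi1' : 0 <= 1 - xi by rewrite subr_ge0; exact: ltW xi1.
    rewrite !enormZ (ger0_norm xi0') (ger0_norm xi1').
    have h1 : xi * enorm a <= xi * Rr by apply: ler_wpM2l.
    have h2 : (1 - xi) * enorm b <= (1 - xi) * Rr by apply: ler_wpM2l.
    lra.
  case: z1D z2D => [h1x h1y] [h2x h2y]; split.
  - exact: (cvx _ z1.1.2 z2.1.2 h1x h2x).
  - exact: (cvx _ z1.2 z2.2 h1y h2y).
have hd : differentiable F q by case: hC.
have HD := Dnorm d hd.
have Hmu := mu_bound hC hl (ltW R0) R1 L0 qD.
have hd2 : enorm d.2 = enorm (z1.2 - z2.2) by [].
have hJ' : enorm (row_mx d.1.1 d.1.2) <= L^-1 * enorm (z1.2 - z2.2) by exact: hJ.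
rewrite hd2 in HD.
have o1 := opnorm_ge0 (dy_fy F q).
have o2 := opnorm_ge0 (dlx_fy F q).
have en := enorm_ge0 (z1.2 - z2.2).
have H3 : opnorm (dlx_fy F q) * enorm (row_mx d.1.1 d.1.2) <=
          opnorm (dlx_fy F q) * (L^-1 * enorm (z1.2 - z2.2)).
  by rewrite ler_wpM2l.
apply: le_trans Hm _; apply: le_trans HD _.
apply: le_trans (_ : (opnorm (dy_fy F q) + L^-1 * opnorm (dlx_fy F q)) * enorm (z1.2 - z2.2) <= _).
  rewrite mulrDl; apply: lerD => //.
  by apply: le_trans H3 _; rewrite mulrA [_ * L^-1]mulrC.
by rewrite ler_wpM2r.
Qed.
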